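(* Let $q\ge 3$ be odd and $n\ge 1$. There exists a quasi-complementary Lee metric Gray code of $q$-ary $n$-tuples.
   Context: Lee distance between $v,u\in\mathbb{Z}_q^n$ is $\sum_{i}\min\{|v_i-u_i|,q-|v_i-u_i|\}$ (entries regarded as integers in $\{0,\ldots,q-1\}$). A quasi-complementary Lee metric Gray code of $q$-ary $n$-tuples is an ordering $G(0),\ldots,G(q^n-1)$ of all words of $\mathbb{Z}_q^n$ such that consecutive words $G(i),G(i+1)$ ($0\le i<q^n-1$) have Lee distance $1$ and $G((i+q^{n-1})\bmod q^n)=G(i)+(1,1,\ldots,1)$ for all $i$, with addition in $\mathbb{Z}_q^n$. *)

(* Defs.v *)
From mathcomp Require Import all_boot.
Set Implicit Arguments. Unset Strict Implicit. Unset Printing Implicit Defensive.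

Definition word (q n : nat) := {ffun 'I_n -> 'I_q}.

Definition lee_entry (q a b : nat) : nat :=
  let d := maxn a b - minn a b in minn d (q - d).

Definition lee_dist (q n : nat) (v u : word q n) : nat :=
  \sum_(i < n) lee_entry q (v i) (u i).

(* v + (1,1,...,1) in Z_q^n  (insubd default is never used since q > 0). *)
Definition add_ones (q n : nat) (v : word q n) : word q n :=
  [ffun i => insubd (v i) ((v i + 1) %% q)].

Definition qc_lee_gray_code (q n : nat) (G : 'I_(q ^ n) -> word q n) : Prop :=
  [/\ bijective G,
      (forall i j : 'I_(q ^ n), val j = (val i).+1 -> lee_dist (G i) (G j) = 1) &
      (forall i j : 'I_(q ^ n), val j = (val i + q ^ (n - 1)) %% q ^ n ->
          G j = add_ones (G i))].

(* Main.v *)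
Require Import Defs.
From mathcomp Require Import all_boot.
From mathcomp Require Import zify.

Definition zz (q b : nat) := if odd (b %/ q) then q.-1 - b %% q else b %% q.
Definition absd (a b : nat) := (a - b) + (b - a).

Lemma zz_lt q b : 0 < q -> zz q b < q.
Proof. move=> hq; rewrite /zz; have := ltn_pmod b hq; case: odd; lia. Qed.

Lemma zzE q c a : a < q -> zz q (c * q + a) = if odd c then q.-1 - a else a.
Proof.
move=> ha; have hq : 0 < q by lia.
rewrite /zz divnMDl // divn_small // addn0 modnMDl modn_small //.
Qed.

Lemma zz0 q : 0 < q -> zz q 0 = 0.
Proof. by move=> hq; rewrite /zz div0n mod0n. Qed.

Lemma zstep q m r : 2 < q -> odd q -> r.+1 < q ^ m ->
  \sum_(j < m) absd (zz q (r.+1 %/ q ^ j)) (zz q (r %/ q ^ j)) = 1.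
Proof.
move=> q3 oq; have hq : 0 < q by lia.
elim: m r => [|m IH] r hr; first by rewrite expn0 in hr.
rewrite big_ord_recl /= !expn0 !divn1.
have E : forall x (j : nat), x %/ q ^ j.+1 = x %/ q %/ q ^ j.
  by move=> x j; rewrite expnS divnMA.
under eq_bigr => j _ do rewrite /bump /= add1n !E.
have hr2 := hr.
rewrite (divn_eq r q) in hr2 *.
set c := r %/ q in hr2 *; set a := r %% q in hr2 *.
have ha : a < q by apply: ltn_pmod.
case: (ltnP a.+1 q) => h.
- rewrite -addnS !zzE // !divnMDl // !divn_small // !addn0.
  rewrite big1 ?addn0; last by move=> j _; rewrite /absd; lia.
  rewrite /absd; case: odd; lia.
- have ea : a = q.-1 by lia.
  have -> : c * q + a = c * q + q.-1 by rewrite ea.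
  have -> : (c * q + q.-1).+1 = c.+1 * q + 0 by rewrite mulSn; lia.
  rewrite !zzE // ?prednK // !divnMDl // !divn_small // ?prednK // !addn0.
  rewrite (IH c); last first.
    move: hr2; rewrite ea expnS => hr2.
    have : q * c.+1 < q * q ^ m by rewrite mulnC mulSn; nia.
    by rewrite ltn_pmul2l.
  by rewrite /= /absd; case: (odd c) => /=; lia.
Qed.

Lemma zinj q m r r' : 0 < q -> r < q ^ m -> r' < q ^ m ->
  (forall j : 'I_m, zz q (r %/ q ^ j) = zz q (r' %/ q ^ j)) -> r = r'.
Proof.
move=> hq; elim: m r r' => [|m IH] r r'.
  by rewrite expn0; case: r => //; case: r'.
move=> hr hr' H.
have E : forall x (j : nat), x %/ q ^ j.+1 = x %/ q %/ q ^ j.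
  by move=> x j; rewrite expnS divnMA.
have hc : r %/ q = r' %/ q.
  apply: IH.
  - by rewrite ltn_divLR // mulnC -expnS.
  - by rewrite ltn_divLR // mulnC -expnS.
  move=> j; rewrite -!E; exact: (H (lift ord0 j)).
have := H ord0; rewrite /= expn0 !divn1 (divn_eq r q) (divn_eq r' q) -hc.
have ha := ltn_pmod r hq; have ha' := ltn_pmod r' hq.
rewrite !zzE // => h.
have : r %% q = r' %% q by move: h; case: odd; lia.
move=> e; rewrite (divn_eq r q) (divn_eq r' q) hc e //.
Qed.

Lemma zz_top q m j : 0 < q -> odd q -> j < m -> zz q ((q ^ m).-1 %/ q ^ j) = q.-1.
Proof.
move=> hq oq hj.
have -> : m = j + (m - j - 1).+1 by lia.
set k := m - j - 1.
have hX : 0 < q ^ j by rewrite expn_gt0 hq.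
have hY : 0 < q ^ k by rewrite expn_gt0 hq.
have -> : (q ^ (j + k.+1)).-1 = (q ^ k.+1).-1 * q ^ j + (q ^ j).-1.
  rewrite expnD expnS; nia.
rewrite divnMDl // divn_small ?addn0; last by lia.
have -> : (q ^ k.+1).-1 = (q ^ k).-1 * q + q.-1 by rewrite expnS; nia.
rewrite zzE; last by lia.
have : odd (q ^ k) by rewrite oddX oq orbT.
by case: (q ^ k) hY => // x _ /= /negbTE ->.
Qed.

Lemma lee_refl q a : lee_entry q a a = 0.
Proof. rewrite /lee_entry; lia. Qed.

Lemma lee_sym q a b : lee_entry q a b = lee_entry q b a.
Proof. rewrite /lee_entry; lia. Qed.

Lemma lee_succ q x : 1 < q -> lee_entry q (x %% q) (x.+1 %% q) = 1.
Proof.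
move=> q1; have hq : 0 < q by lia.
rewrite -addn1 -modnDml; set a := x %% q.
have ha : a < q by apply: ltn_pmod.
case: (ltnP a.+1 q) => h.
  rewrite addn1 modn_small //; rewrite /lee_entry; lia.
have -> : a + 1 = q by lia.
rewrite modnn /lee_entry; lia.
Qed.

Lemma lee_coord q s z z' : 2 < q -> z < q -> z' < q -> absd z' z <= 1 ->
  lee_entry q ((s + (q.-1 - z)) %% q) ((s + (q.-1 - z')) %% q) = absd z' z.
Proof.
move=> q3 hz hz' hd.
have [e|ne] := eqVneq z z'.
  by rewrite e lee_refl /absd; lia.
have [e|e] : z' = z.+1 \/ z = z'.+1 by rewrite /absd in hd; lia.
- have -> : s + (q.-1 - z) = (s + (q.-1 - z')).+1 by lia.
  rewrite lee_sym lee_succ ?e /absd; lia.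
- have -> : s + (q.-1 - z') = (s + (q.-1 - z)).+1 by lia.
  rewrite lee_succ ?e /absd; lia.
Qed.

Lemma lee_one q n (u v : word q n) k :
  (forall j, j != k -> u j = v j) -> lee_entry q (u k) (v k) = 1 -> lee_dist u v = 1.
Proof.
move=> H Hk; rewrite /lee_dist (bigD1 k) //= Hk big1 ?addn0 // => j hj.
by rewrite H // lee_refl.
Qed.

Definition coord q m i (j : nat) :=
  (i %/ q ^ m + 1 + (q.-1 - zz q ((i %% q ^ m) %/ q ^ j))) %% q.

Definition Gf q m (hq : 0 < q) (i : 'I_(q ^ m.+1)) : word q m.+1 :=
  [ffun j : 'I_m.+1 => Ordinal (ltn_pmod (coord q m i j) hq)].

Lemma coord_top q m i : 0 < q -> i < q * q ^ m -> coord q m i m = i %/ q ^ m.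
Proof.
move=> hq hi; have hd : 0 < q ^ m by rewrite expn_gt0 hq.
rewrite /coord (divn_small (ltn_pmod i hd)) zz0 // subn0.
have ht : i %/ q ^ m < q by rewrite ltn_divLR // mulnC.
have -> : i %/ q ^ m + 1 + q.-1 = i %/ q ^ m + q by lia.
by rewrite modnDr modn_small.
Qed.

Lemma GfE q m hq i (k : 'I_m.+1) : (Gf q m hq i k : nat) = coord q m i k.
Proof. by rewrite ffunE /= /coord modn_mod. Qed.

Theorem corollary2 (q n : nat) :
  3 <= q -> odd q -> 1 <= n ->
  exists G : 'I_(q ^ n) -> word q n, qc_lee_gray_code G.
Proof.
move=> q3 oq; case: n => // m _.
have hq : 0 < q by lia.
exists (Gf q m hq).
have hd : 0 < q ^ m by rewrite expn_gt0 hq.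
have qn : q ^ m.+1 = q * q ^ m by rewrite expnS.
split.
- apply: inj_card_bij; last by rewrite card_ffun !card_ord.
  move=> i i' /ffunP H.
  have Hc : forall j : 'I_m.+1, coord q m i j = coord q m i' j.
    by move=> j; have := congr1 val (H j); rewrite !ffunE /= /coord !modn_mod.
  have hi : (i : nat) < q * q ^ m by rewrite -qn.
  have hi' : (i' : nat) < q * q ^ m by rewrite -qn.
  have ht : i %/ q ^ m = i' %/ q ^ m.
    by have := Hc ord_max; rewrite /= !coord_top.
  have hr : i %% q ^ m = i' %% q ^ m.
    apply: (zinj _ _ _ _ hq (ltn_pmod _ hd) (ltn_pmod _ hd)) => j.
    have := Hc (widen_ord (leqnSn m) j); rewrite /coord /= ht.
    move/eqP; rewrite eqn_modDl => /eqP.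
    have h1 := zz_lt q (i %% q ^ m %/ q ^ j) hq; have h2 := zz_lt q (i' %% q ^ m %/ q ^ j) hq.
    rewrite (modn_small (m:= q.-1 - zz q (i %% q ^ m %/ q ^ j))); last lia.
    rewrite (modn_small (m:= q.-1 - zz q (i' %% q ^ m %/ q ^ j))); last lia.
    lia.
  by apply: val_inj; rewrite /= (divn_eq i (q ^ m)) (divn_eq i' (q ^ m)) ht hr.
- move=> i j e.
  have hi : (i : nat) < q * q ^ m by rewrite -qn.
  have hj : (j : nat) < q * q ^ m by rewrite -qn.
  have ei := divn_eq i (q ^ m).
  have hr0 : i %% q ^ m < q ^ m by apply: ltn_pmod.
  have ej : (j : nat) = i %/ q ^ m * q ^ m + (i %% q ^ m).+1.
    by rewrite e addnS -ei.
  case: (ltnP (i %% q ^ m).+1 (q ^ m)) => hr.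
  + have tj : j %/ q ^ m = i %/ q ^ m by rewrite ej divnMDl // (divn_small hr) addn0.
    have rj : j %% q ^ m = (i %% q ^ m).+1 by rewrite ej modnMDl modn_small.
    have hr' : (i %% q ^ m).+1 < q ^ m.+1 by apply: (leq_trans hr); rewrite leq_exp2l //; lia.
    have Z := zstep q m.+1 (i %% q ^ m) q3 oq hr'.
    rewrite /lee_dist -[RHS]Z; apply: eq_bigr => k _.
    rewrite !GfE /coord tj rj; apply: lee_coord => //; try exact: zz_lt.
    by move: Z; rewrite (bigD1 k) //=; lia.
  + have er : i %% q ^ m = (q ^ m).-1 by lia.
    have tj : j %/ q ^ m = (i %/ q ^ m).+1.
      by rewrite ej er prednK // -mulSnr mulnK.
    have rj : j %% q ^ m = 0.
      by rewrite ej er prednK // -mulSnr modnMl.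
    apply: (lee_one _ _ _ _ ord_max).
    * move=> k hk; apply: val_inj; rewrite /= !GfE /coord tj rj er div0n zz0 //.
      have hk' : (k : nat) < m.
        by have := ltn_ord k; move: hk; rewrite -(inj_eq val_inj) /=; lia.
      rewrite zz_top // subnn subn0.
      have -> : (i %/ q ^ m).+1 + 1 + q.-1 = (i %/ q ^ m + 1 + 0) + q by lia.
      by rewrite modnDr.
    * rewrite !GfE /= !coord_top // tj.
      have : j %/ q ^ m < q by rewrite ltn_divLR // mulnC.
      rewrite tj /lee_entry; lia.
- move=> i j e0.
  have e : (j : nat) = (i + q ^ m) %% (q * q ^ m) by rewrite -qn e0 subSS subn0.
  apply/ffunP => k; apply: val_inj; rewrite /= GfE /add_ones ffunE val_insubd ltn_pmod // GfE.
  have rj : j %% q ^ m = i %% q ^ m.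
    by rewrite e (modn_dvdm _ (dvdn_mull _ (dvdnn _))) modnDr.
  have tj : j %/ q ^ m = (i %/ q ^ m + 1) %% q.
    by rewrite e -modn_divl divnDr ?dvdnn // divnn hd.
  rewrite /coord tj rj -addnA modnDml modnDml.
  congr (_ %% _); lia.
Qed.
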